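(* Fix $\sigma\in(0,\tfrac12)$. There exist $\lambda^{*}>0$ and $s^{*}\in(0,1)$ such that: (i) for all $\lambda\in(0,\lambda^{*})$, $\mathcal{I}^1_\lambda=(0,1)$; (ii) for $\lambda=\lambda^{*}$, $\mathcal{I}^1_\lambda=(0,1)\setminus\{s^{*}\}$; (iii) for all $\lambda>\lambda^{*}$ there exist $s_0,s_1\in(0,1)$ with $s_0<s^{*}<s_1$ such that $\mathcal{I}^1_\lambda=(0,s_0)\cup(s_1,1)$.
   Context: Let $g(s)=s^2(1-s)$ and $G(u)=u^3/3-u^4/4$ on $[0,1]$. For $\lambda>0$ and $s\in(0,1)$, let $(\hat u_s,\hat v_s)$ be the unique solution, on its maximal interval of existence, of $u'=v$, $v'=-\lambda g(u)$, $u(1)=s$, $v(1)=0$. Let $\hat T_0(s)$ denote the time taken by $(\hat u_s,\hat v_s)$ to go from $(s,0)$ to the half-line $\{0\}\times(0,+\infty)$ moving backwards in time along the level line $v^2+2\lambda G(u)=2\lambda G(s)$. Set $\mathcal{I}^1_\lambda=\{s\in(0,1):\hat T_0(s)>\sigma\}$. *)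

(* Defs.v *)
From Stdlib Require Import Reals Lra.
From Coquelicot Require Import Coquelicot.
Open Scope R_scope.

Definition g (s : R) : R := s ^ 2 * (1 - s).
Definition G (u : R) : R := u ^ 3 / 3 - u ^ 4 / 4.

(* [hatT0_is lam s T]: the solution (u,v) of u' = v, v' = -lam g(u),
   u(1) = s, v(1) = 0, followed backwards in time from t = 1, reaches the
   half-line {0} x (0,+oo) for the first time at time 1 - T, i.e. T is the
   time hat T_0(s).  The ODE is required on [1-T,1] (which lies inside the
   open maximal interval of existence, so two-sided derivatives exist there);
   by uniqueness for this locally Lipschitz system, T is uniquely determined. *)
Definition hatT0_is (lam s T : R) : Prop :=
  0 < T /\
  exists u v : R -> R,
    (forall t, 1 - T <= t <= 1 ->
       is_derive u t (v t) /\ is_derive v t (- lam * g (u t))) /\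
    u 1 = s /\ v 1 = 0 /\
    u (1 - T) = 0 /\ 0 < v (1 - T) /\
    (forall t, 1 - T < t <= 1 -> ~ (u t = 0 /\ 0 < v t)).

Definition I1 (sigma lam s : R) : Prop :=
  0 < s < 1 /\ exists T, hatT0_is lam s T /\ sigma < T.

(* Main.v *)
Require Import Defs.
From Stdlib Require Import Reals Lra Psatz ClassicalEpsilon Ranalysis5.
From Coquelicot Require Import Coquelicot.
Open Scope R_scope.

Definition Rw (s w : R) : R := (1 + w + w^2)/3 - s*(1+w)*(1+w^2)/4.
Definition Q (s y : R) : R := Rw s (1 - y^2).
Definition psi (s y : R) : R := / sqrt (s * Q s y).
Definition H (s : R) : R := RInt (psi s) 0 1.

Lemma Q_pos s y : 0 <= s < 1 -> 0 < Q s y.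
Proof.
  intros Hs. unfold Q, Rw.
  set (w := 1 - y^2).
  assert (E : (1 + w + w^2)/3 - s*(1+w)*(1+w^2)/4 =
     (1-s)*(1+w+w^2)/3 + s * y^2 * (3*w^2+2*w+1)/12) by (unfold w; field).
  rewrite E.
  assert (0 < 1 + w + w^2) by nra.
  assert (0 < 3*w^2+2*w+1) by nra.
  assert (0 <= s * y^2 * (3*w^2+2*w+1)).
  { apply Rmult_le_pos; [apply Rmult_le_pos; nra| lra]. }
  nra.
Qed.

Lemma sQ_pos s y : 0 < s < 1 -> 0 < s * Q s y.
Proof. intros. apply Rmult_lt_0_compat; [lra| apply Q_pos; lra]. Qed.

Lemma psi_derive s y : 0 < s < 1 -> ex_derive (psi s) y.
Proof.
  intros Hs. pose proof (sQ_pos s y Hs). unfold psi, Q, Rw in *.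
  auto_derive. split; [lra|]. split; [|auto].
  apply Rgt_not_eq. apply sqrt_lt_R0. lra.
Qed.

Definition cc (lam : R) : R := sqrt (2/lam).
Definition phi (lam s y : R) : R := cc lam * psi s y.
Definition tau (lam s x : R) : R := RInt (phi lam s) 0 x.
Definition Xinv (lam s t : R) : R := epsilon (inhabits 0) (fun x => tau lam s x = t).

Section Ex.
Variables lam s : R.
Hypothesis Hlam : 0 < lam.
Hypothesis Hs : 0 < s < 1.

Lemma cc_pos : 0 < cc lam.
Proof. unfold cc. apply sqrt_lt_R0. apply Rdiv_lt_0_compat; lra. Qed.

Lemma psi_pos y : 0 < psi s y.
Proof. unfold psi. apply Rinv_0_lt_compat, sqrt_lt_R0, sQ_pos; lra. Qed.

Lemma phi_pos y : 0 < phi lam s y.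
Proof. unfold phi. apply Rmult_lt_0_compat; [apply cc_pos| apply psi_pos]. Qed.

Lemma phi_cont y : continuous (phi lam s) y.
Proof.
  apply (@ex_derive_continuous R_AbsRing R_NormedModule). unfold phi.
  apply ex_derive_scal. apply psi_derive. lra.
Qed.

Lemma tau_derive x : is_derive (tau lam s) x (phi lam s x).
Proof.
  apply is_derive_RInt with (a := 0).
  - apply filter_forall. intros b. unfold tau. apply (@RInt_correct R_CompleteNormedModule).
    apply ex_RInt_continuous. intros. apply phi_cont.
  - apply phi_cont.
Qed.

Lemma tau_cont x : continuity_pt (tau lam s) x.
Proof.
  apply continuity_pt_filterlim. apply (@ex_derive_continuous R_AbsRing R_NormedModule).
  eexists. apply tau_derive.
Qed.

Lemma tau_incr x y : x < y -> tau lam s x < tau lam s y.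
Proof.
  intros Hxy.
  destruct (MVT_gen (tau lam s) x y (phi lam s)) as [c [_ Hc]].
  - intros. apply tau_derive.
  - intros. apply tau_cont.
  - pose proof (phi_pos c). nra.
Qed.

Lemma tau_le x y : x <= y -> tau lam s x <= tau lam s y.
Proof. intros [H|H]. left; apply tau_incr; auto. subst; lra. Qed.

Lemma tau_inj x y : tau lam s x = tau lam s y -> x = y.
Proof.
  intros E. destruct (Rtotal_order x y) as [h|[h|h]]; auto.
  apply tau_incr in h; lra. apply tau_incr in h; lra.
Qed.

Lemma tau0 : tau lam s 0 = 0.
Proof. unfold tau. rewrite RInt_point. reflexivity. Qed.

Lemma Xinv_spec t : tau lam s (-1) <= t <= tau lam s 2 ->
  tau lam s (Xinv lam s t) = t.
Proof.
  intros Ht. unfold Xinv. apply epsilon_spec.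
  destruct (IVT_gen (tau lam s) (-1) 2 t) as [x [_ Hx]].
  - intro. apply tau_cont.
  - rewrite Rmin_left, Rmax_right; try lra; pose proof (tau_incr (-1) 2); lra.
  - exists x; auto.
Qed.

Lemma Xinv_range t : tau lam s (-1) <= t <= tau lam s 2 ->
  -1 <= Xinv lam s t <= 2.
Proof.
  intros Ht. pose proof (Xinv_spec t Ht) as E.
  split; apply Rnot_lt_le; intro h; apply tau_incr in h; lra.
Qed.

Lemma Xinv_tau x : -1 <= x <= 2 -> Xinv lam s (tau lam s x) = x.
Proof.
  intros Hx. apply tau_inj. apply Xinv_spec. split; apply tau_le; lra.
Qed.

Lemma Xinv_derive t : tau lam s (-1) < t < tau lam s 2 ->
  is_derive (Xinv lam s) t (/ phi lam s (Xinv lam s t)).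
Proof.
  intros Ht.
  assert (Hd : forall a, derivable_pt (tau lam s) a).
  { intros a. exists (phi lam s a). apply is_derive_Reals, tau_derive. }
  assert (Hid : forall x0, tau lam s (-1) <= x0 <= tau lam s 2 ->
     comp (tau lam s) (Xinv lam s) x0 = id x0).
  { intros. unfold comp, id. apply Xinv_spec. auto. }
  assert (Hc : continuity_pt (Xinv lam s) t).
  { apply (continuity_pt_recip_interv (tau lam s) (Xinv lam s) (-1) 2).
    - lra.
    - intros; apply tau_incr; lra.
    - intros; apply Hid; lra.
    - intros; apply Xinv_range; lra.
    - intros; apply tau_cont.
    - lra. }
  pose proof (Xinv_range t (conj (Rlt_le _ _ (proj1 Ht)) (Rlt_le _ _ (proj2 Ht)))) as Hr.
  assert (Hincr : Xinv lam s (tau lam s (-1)) <= Xinv lam s t <= Xinv lam s (tau lam s 2)).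
  { rewrite !Xinv_tau; lra. }
  pose proof (derivable_pt_lim_recip_interv (tau lam s) (Xinv lam s)
     (tau lam s (-1)) (tau lam s 2) t (fun a _ => Hd a) Hc
     ltac:(lra) Ht Hincr Hid) as HH.
  assert (Ed : derive_pt (tau lam s) (Xinv lam s t) (Hd (Xinv lam s t)) = phi lam s (Xinv lam s t)).
  { apply derive_pt_eq_0. apply is_derive_Reals, tau_derive. }
  cbv beta in HH. rewrite Ed in HH. apply is_derive_Reals.
  replace (/ phi lam s (Xinv lam s t)) with (1 / phi lam s (Xinv lam s t)) by (unfold Rdiv; ring).
  apply HH. pose proof (phi_pos (Xinv lam s t)). lra.
Qed.

End Ex.

Lemma deq (f : R -> R) (x a b : R) : is_derive f x a -> a = b -> is_derive f x b.
Proof. intros H E; subst; auto. Qed.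
Lemma dmult (f g : R -> R) (x df dg : R) : is_derive f x df -> is_derive g x dg ->
  is_derive (fun t => f t * g t) x (df * g x + f x * dg).
Proof. intros. apply (is_derive_mult f g x df dg); auto. intros; apply Rmult_comm. Qed.
Lemma dplus (f g : R -> R) (x df dg : R) : is_derive f x df -> is_derive g x dg ->
  is_derive (fun t => f t + g t) x (df + dg).
Proof. intros. apply (is_derive_plus f g x df dg); auto. Qed.
Lemma dminus (f g : R -> R) (x df dg : R) : is_derive f x df -> is_derive g x dg ->
  is_derive (fun t => f t - g t) x (df - dg).
Proof. intros. apply (is_derive_minus f g x df dg); auto. Qed.
Lemma dcomp (f g : R -> R) (x df dg : R) : is_derive f (g x) df -> is_derive g x dg ->
  is_derive (fun t => f (g t)) x (dg * df).
Proof. intros. apply (is_derive_comp f g x df dg); auto. Qed.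

Definition dQ (s y : R) : R :=
  let w := 1 - y^2 in
  (-2*y) * ((1 + 2*w)/3 - s*((1+w^2) + (1+w)*(2*w))/4).

Lemma Q_derive s y : is_derive (Q s) y (dQ s y).
Proof.
  unfold Q, Rw, dQ. auto_derive. auto. simpl. field.
Qed.

Lemma key_identity s x :
  Q s x + x * dQ s x / 2 = (1 - x^2)^2 * (1 - s * (1 - x^2)).
Proof. unfold Q, Rw, dQ. simpl. field. Qed.

Section Sol.
Variables lam s : R.
Hypothesis Hlam : 0 < lam.
Hypothesis Hs : 0 < s < 1.

Definition Y t := Xinv lam s (1 - t).
Definition uu t := s * (1 - (Y t)^2).
Definition vv t := 2 * s / cc lam * (Y t * sqrt (s * Q s (Y t))).

Lemma cc_sq : cc lam * cc lam = 2 / lam.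
Proof. unfold cc. apply sqrt_sqrt. apply Rlt_le, Rdiv_lt_0_compat; lra. Qed.

Lemma Y_derive t : tau lam s (-1) < 1 - t < tau lam s 2 ->
  is_derive Y t (- / phi lam s (Y t)).
Proof.
  intros Ht. unfold Y.
  apply deq with (-1 * / phi lam s (Xinv lam s (1 - t))); [|ring].
  apply (dcomp (Xinv lam s) (fun t => 1 - t)).
  - apply Xinv_derive; auto.
  - auto_derive; auto; ring.
Qed.

Lemma F1_derive x : is_derive (fun x => s * (1 - x^2)) x (s * (- (2 * x))).
Proof. auto_derive; auto; ring. Qed.

Lemma F2_derive x : is_derive (fun x => 2 * s / cc lam * (x * sqrt (s * Q s x))) x
  (2 * s / cc lam * (1 * sqrt (s * Q s x) + x * (s * dQ s x / (2 * sqrt (s * Q s x))))).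
Proof.
  apply (is_derive_scal (fun x => x * sqrt (s * Q s x))).
  apply (dmult (fun x => x) (fun x => sqrt (s * Q s x))).
  - auto_derive; auto.
  - apply (is_derive_sqrt (fun x => s * Q s x)).
    + apply (is_derive_scal (Q s)). apply Q_derive.
    + apply sQ_pos; auto.
Qed.

Lemma uu_derive t : tau lam s (-1) < 1 - t < tau lam s 2 ->
  is_derive uu t (vv t).
Proof.
  intros Ht. unfold uu.
  eapply deq.
  - apply (dcomp (fun x => s * (1 - x^2)) Y). apply F1_derive. apply Y_derive; auto.
  - unfold vv, phi, psi. pose proof (sQ_pos s (Y t) Hs) as HQ0.
    pose proof (sqrt_lt_R0 _ HQ0). pose proof (cc_pos lam Hlam).
    field. split; lra.
Qed.

Lemma vv_derive t : tau lam s (-1) < 1 - t < tau lam s 2 ->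
  is_derive vv t (- lam * g (uu t)).
Proof.
  intros Ht. unfold vv.
  eapply deq.
  - apply (dcomp (fun x => 2 * s / cc lam * (x * sqrt (s * Q s x))) Y).
    apply F2_derive. apply Y_derive; auto.
  - unfold phi, psi, uu. set (x := Y t).
    pose proof (sQ_pos s x Hs) as HQ.
    pose proof (sqrt_lt_R0 _ HQ) as Hr. pose proof (cc_pos lam Hlam) as Hc.
    pose proof (sqrt_sqrt _ (Rlt_le _ _ HQ)) as Er.
    set (r := sqrt (s * Q s x)) in *.
    pose proof cc_sq as Ec. set (c := cc lam) in *.
    transitivity (- (2 * s / (c * c)) * (r * r + x * (s * dQ s x) / 2)).
    { field. split; lra. }
    rewrite Ec, Er.
    transitivity (- lam * s^2 * (Q s x + x * dQ s x / 2)).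
    { field. lra. }
    rewrite key_identity. unfold g. ring.
Qed.
End Sol.

Lemma existence lam s : 0 < lam -> 0 < s < 1 -> hatT0_is lam s (tau lam s 1).
Proof.
  intros Hlam Hs.
  pose proof (tau0 lam s) as E0.
  pose proof (tau_incr lam s Hlam Hs (-1) 0 ltac:(lra)) as Hm1.
  pose proof (tau_incr lam s Hlam Hs 0 1 ltac:(lra)) as H01.
  pose proof (tau_incr lam s Hlam Hs 1 2 ltac:(lra)) as H12.
  set (T := tau lam s 1) in *.
  assert (Y1 : Y lam s 1 = 0).
  { unfold Y. replace (1 - 1) with (tau lam s 0) by lra. apply Xinv_tau; auto; lra. }
  assert (YT : Y lam s (1 - T) = 1).
  { unfold Y. replace (1 - (1 - T)) with (tau lam s 1) by (unfold T; lra).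
    apply Xinv_tau; auto; lra. }
  split; [lra|].
  exists (uu lam s), (vv lam s).
  split; [|split; [|split; [|split; [|split]]]].
  - intros t Ht. split.
    + apply uu_derive; auto; lra.
    + apply vv_derive; auto; lra.
  - unfold uu. rewrite Y1. ring.
  - unfold vv. rewrite Y1. ring.
  - unfold uu. rewrite YT. ring.
  - unfold vv. rewrite YT.
    pose proof (sqrt_lt_R0 _ (sQ_pos s 1 Hs)). pose proof (cc_pos lam Hlam).
    apply Rmult_lt_0_compat. apply Rdiv_lt_0_compat; lra. lra.
  - intros t Ht [Hu _]. unfold uu in Hu.
    assert (Hr : tau lam s (-1) <= 1 - t <= tau lam s 2) by lra.
    assert (Es : tau lam s (Y lam s t) = 1 - t) by (unfold Y; apply Xinv_spec; auto).
    assert (0 <= Y lam s t).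
    { apply Rnot_lt_le. intro h. apply (tau_incr lam s Hlam Hs) in h. lra. }
    assert (Y lam s t < 1).
    { apply Rnot_le_lt. intro h. apply (tau_le lam s Hlam Hs) in h. fold T in h. lra. }
    assert (0 < 1 - Y lam s t ^ 2) by nra.
    nra.
Qed.

Lemma cont_of_deriv (f : R -> R) x l : is_derive f x l -> continuity_pt f x.
Proof.
  intros H. apply continuity_pt_filterlim.
  apply (@ex_derive_continuous R_AbsRing R_NormedModule). exists l; auto.
Qed.

Definition ODE (lam : R) (u v : R -> R) (a : R) :=
  forall t, a <= t <= 1 -> is_derive u t (v t) /\ is_derive v t (- lam * g (u t)).

Lemma uniq lam a u1 v1 u2 v2 : 0 < lam -> a <= 1 ->
  ODE lam u1 v1 a -> ODE lam u2 v2 a -> u1 1 = u2 1 -> v1 1 = v2 1 ->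
  forall t, a <= t <= 1 -> u1 t = u2 t /\ v1 t = v2 t.
Proof.
  intros Hlam Ha H1 H2 E1 E2.
  set (W := fun t => u1 t * u1 t + u2 t * u2 t).
  destruct (continuity_ab_maj W a 1 Ha) as [Mx [HM HMx]].
  { intros c Hc. unfold W.
    destruct (H1 c Hc) as [Hu1 _]. destruct (H2 c Hc) as [Hu2 _].
    apply cont_of_deriv in Hu1. apply cont_of_deriv in Hu2.
    apply continuity_pt_plus; apply continuity_pt_mult; auto. }
  set (M := W Mx) in *.
  assert (M0 : 0 <= M) by (unfold M, W; nra).
  set (C := 2 + 4 * M). set (K := 1 + lam * C).
  set (D := fun t => (u1 t - u2 t) * (u1 t - u2 t) + (v1 t - v2 t) * (v1 t - v2 t)).
  set (F := fun t => D t * exp (K * t)).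
  set (dD := fun t => 2 * (u1 t - u2 t) * (v1 t - v2 t)
     + 2 * (v1 t - v2 t) * (- lam * g (u1 t) + lam * g (u2 t))).
  assert (HF : forall t, a <= t <= 1 -> is_derive F t ((dD t + K * D t) * exp (K * t))).
  { intros t Ht. destruct (H1 t Ht) as [Hu1 Hv1]. destruct (H2 t Ht) as [Hu2 Hv2].
    assert (Hdu := dminus _ _ _ _ _ Hu1 Hu2).
    assert (Hdv := dminus _ _ _ _ _ Hv1 Hv2).
    assert (HD : is_derive D t (dD t)).
    { unfold D. eapply deq.
      apply dplus; apply dmult; eauto.
      unfold dD. ring. }
    assert (HE : is_derive (fun t => exp (K * t)) t (K * exp (K * t))).
    { auto_derive; auto. now rewrite Rmult_1_r. }
    unfold F. eapply deq. apply dmult. exact HD. exact HE. cbv beta. ring. }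
  assert (HFp : forall t, a <= t <= 1 -> 0 <= (dD t + K * D t) * exp (K * t)).
  { intros t Ht. apply Rmult_le_pos; [|apply Rlt_le, exp_pos].
    pose proof (HM t Ht) as Wt. unfold W in Wt. fold M in Wt.
    set (x := u1 t) in *. set (y := u2 t) in *.
    set (p := x + y - (x*x + x*y + y*y)).
    pose proof (Rle_0_sqr (x-1)). pose proof (Rle_0_sqr (x+1)).
    pose proof (Rle_0_sqr (y-1)). pose proof (Rle_0_sqr (y+1)).
    pose proof (Rle_0_sqr (x+y)). pose proof (Rle_0_sqr (x-y)).
    unfold Rsqr in *.
    assert (0 <= x*x+x*y+y*y) by lra.
    assert (x*x+x*y+y*y <= 3/2 * (x*x+y*y)) by lra.
    assert (Hp1 : p <= C) by (unfold p, C; lra).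
    assert (Hp2 : - C <= p) by (unfold p, C; lra).
    set (du := x - y). set (dv := v1 t - v2 t).
    assert (Eq : dD t + K * D t = (du + dv) * (du + dv) +
       lam * ((C - p) * (du + dv) * (du + dv) / 2 + (C + p) * (du - dv) * (du - dv) / 2)).
    { unfold dD, D, K, du, dv, p, g. fold x y. field. }
    rewrite Eq.
    assert (0 <= (C - p) * (du + dv) * (du + dv)).
    { rewrite Rmult_assoc. apply Rmult_le_pos; [lra|apply Rle_0_sqr]. }
    assert (0 <= (C + p) * (du - dv) * (du - dv)).
    { rewrite Rmult_assoc. apply Rmult_le_pos; [lra|apply Rle_0_sqr]. }
    assert (0 <= lam * ((C - p) * (du + dv) * (du + dv) / 2 + (C + p) * (du - dv) * (du - dv) / 2)).
    { apply Rmult_le_pos; lra. }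
    pose proof (Rle_0_sqr (du+dv)). unfold Rsqr in *. lra. }
  intros t Ht.
  assert (Ft : F t <= 0).
  { destruct (Req_dec t 1) as [->|Hne].
    - unfold F, D. rewrite E1, E2. ring_simplify. lra.
    - destruct (MVT_gen F t 1 (fun t => (dD t + K * D t) * exp (K * t))) as [c [Hc Ec]].
      + intros x Hx. rewrite Rmin_left, Rmax_right in Hx by lra. apply HF; lra.
      + intros x Hx. rewrite Rmin_left, Rmax_right in Hx by lra.
        eapply cont_of_deriv. apply HF; lra.
      + rewrite Rmin_left, Rmax_right in Hc by lra.
        assert (F 1 = 0) by (unfold F, D; rewrite E1, E2; ring).
        pose proof (HFp c ltac:(lra)). nra. }
  unfold F, D in Ft. pose proof (exp_pos (K * t)).
  assert (Dt : (u1 t - u2 t) * (u1 t - u2 t) + (v1 t - v2 t) * (v1 t - v2 t) <= 0).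
  { apply Rnot_lt_le. intro h. nra. }
  pose proof (Rle_0_sqr (u1 t - u2 t)). pose proof (Rle_0_sqr (v1 t - v2 t)).
  unfold Rsqr in *.
  assert (Z1 : (u1 t - u2 t) * (u1 t - u2 t) = 0) by lra.
  assert (Z2 : (v1 t - v2 t) * (v1 t - v2 t) = 0) by lra.
  apply Rmult_integral in Z1. apply Rmult_integral in Z2.
  split; [destruct Z1|destruct Z2]; lra.
Qed.

Lemma hat_not_lt lam s T1 T2 : 0 < lam ->
  hatT0_is lam s T1 -> hatT0_is lam s T2 -> ~ T1 < T2.
Proof.
  intros Hlam [HT1 [u1 [v1 [D1 [U1 [V1 [Z1 [P1 N1]]]]]]]] [HT2 [u2 [v2 [D2 [U2 [V2 [Z2 [P2 N2]]]]]]]] Hlt.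
  assert (Hu := uniq lam (1 - T1) u1 v1 u2 v2 Hlam ltac:(lra)
    (fun t Ht => D1 t Ht) (fun t Ht => D2 t ltac:(lra)) (eq_trans U1 (eq_sym U2)) (eq_trans V1 (eq_sym V2))).
  destruct (Hu (1 - T1) ltac:(lra)) as [Eu Ev].
  apply (N2 (1 - T1)); [lra|]. split; [rewrite <- Eu|rewrite <- Ev]; auto.
Qed.

Lemma hat_unique lam s T1 T2 : 0 < lam ->
  hatT0_is lam s T1 -> hatT0_is lam s T2 -> T1 = T2.
Proof.
  intros Hl H1 H2. pose proof (hat_not_lt _ _ _ _ Hl H1 H2).
  pose proof (hat_not_lt _ _ _ _ Hl H2 H1). lra.
Qed.

Lemma psi_cont s y : 0 < s < 1 -> continuous (psi s) y.
Proof. intros. apply (@ex_derive_continuous R_AbsRing R_NormedModule). apply psi_derive; auto. Qed.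

Lemma psi_ex s a b : 0 < s < 1 -> ex_RInt (psi s) a b.
Proof. intros. apply (@ex_RInt_continuous R_CompleteNormedModule). intros. apply psi_cont; auto. Qed.

Lemma tau1_H lam s : 0 < s < 1 -> tau lam s 1 = cc lam * H s.
Proof.
  intros Hs. unfold tau, phi, H.
  apply (RInt_scal (V := R_CompleteNormedModule) (psi s) 0 1 (cc lam)).
  apply psi_ex; auto.
Qed.

Lemma I1_char sigma lam s : 0 < lam ->
  (I1 sigma lam s <-> 0 < s < 1 /\ sigma < cc lam * H s).
Proof.
  intros Hl. unfold I1. split.
  - intros [Hs [T [HT Hlt]]]. split; auto.
    rewrite <- tau1_H by auto.
    rewrite <- (hat_unique lam s T (tau lam s 1)); auto.
    apply existence; auto.
  - intros [Hs Hlt]. split; auto. exists (tau lam s 1). split.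
    apply existence; auto. rewrite tau1_H; auto.
Qed.

Lemma tangent x z : 0 < x -> 0 < z ->
  / sqrt z - (x - z) / (2 * z * sqrt z) <= / sqrt x.
Proof.
  intros Hx Hz.
  pose proof (sqrt_lt_R0 _ Hx) as HX. pose proof (sqrt_lt_R0 _ Hz) as HZ.
  pose proof (sqrt_sqrt _ (Rlt_le _ _ Hx)) as EX.
  pose proof (sqrt_sqrt _ (Rlt_le _ _ Hz)) as EZ.
  set (X := sqrt x) in *. set (Z := sqrt z) in *.
  rewrite <- EX, <- EZ.
  assert (E : / X - (/ Z - (X * X - Z * Z) / (2 * (Z * Z) * Z)) =
     (X - Z) * (X - Z) * (X + 2 * Z) / (2 * X * (Z * Z * Z))).
  { field. lra. }
  assert (0 <= (X - Z) * (X - Z) * (X + 2 * Z) / (2 * X * (Z * Z * Z))).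
  { apply Rmult_le_pos. apply Rmult_le_pos. apply Rle_0_sqr. lra.
    apply Rlt_le, Rinv_0_lt_compat. 
    assert (0 < Z*Z*Z) by (repeat apply Rmult_lt_0_compat; lra). nra. }
  lra.
Qed.

Lemma psi_conv s1 s2 t y : 0 < s1 < 1 -> 0 < s2 < 1 -> s1 <> s2 -> 0 < t < 1 ->
  0 < y < 1 ->
  psi (t * s1 + (1 - t) * s2) y < t * psi s1 y + (1 - t) * psi s2 y.
Proof.
  intros H1 H2 Hne Ht Hy.
  set (m := t * s1 + (1 - t) * s2).
  assert (Hm : 0 < m < 1) by (unfold m; split; nra).
  pose proof (sQ_pos s1 y H1) as q1. pose proof (sQ_pos s2 y H2) as q2.
  pose proof (sQ_pos m y Hm) as qm.
  set (w := 1 - y^2).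
  assert (Hw : 0 < w < 1) by (unfold w; split; nra).
  set (bb := (1+w)*(1+w^2)/4).
  assert (Hb : 0 < bb) by (unfold bb; nra).
  set (z := t * (s1 * Q s1 y) + (1 - t) * (s2 * Q s2 y)).
  assert (Hz : 0 < z) by (unfold z; nra).
  assert (Ediff : m * Q m y - z = bb * t * (1 - t) * (s1 - s2)^2).
  { unfold m, z, bb, Q, Rw, w. field. }
  assert (0 < (s1 - s2)^2) by (destruct (Rlt_or_le s1 s2); nra).
  assert (0 < bb * t * (1 - t) * (s1 - s2)^2).
  { apply Rmult_lt_0_compat; auto. apply Rmult_lt_0_compat; [|lra].
    apply Rmult_lt_0_compat; lra. }
  assert (Hlt : / sqrt (m * Q m y) < / sqrt z).
  { apply Rinv_lt_contravar. apply Rmult_lt_0_compat; apply sqrt_lt_R0; lra.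
    apply sqrt_lt_1; lra. }
  pose proof (tangent _ _ q1 Hz) as T1. pose proof (tangent _ _ q2 Hz) as T2.
  assert (E2 : t * (/ sqrt z - (s1 * Q s1 y - z) / (2 * z * sqrt z)) +
               (1 - t) * (/ sqrt z - (s2 * Q s2 y - z) / (2 * z * sqrt z)) = / sqrt z).
  { assert (Ez : t * (s1 * Q s1 y) + (1 - t) * (s2 * Q s2 y) = z) by reflexivity.
    pose proof (sqrt_lt_R0 _ Hz). clearbody z.
    set (q1' := s1 * Q s1 y) in *. set (q2' := s2 * Q s2 y) in *.
    clearbody q1' q2'. subst z. field. split; lra. }
  unfold psi. fold m.
  assert (t * (/ sqrt z - (s1 * Q s1 y - z) / (2 * z * sqrt z)) <= t * / sqrt (s1 * Q s1 y)).
  { apply Rmult_le_compat_l; lra. }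
  assert ((1-t) * (/ sqrt z - (s2 * Q s2 y - z) / (2 * z * sqrt z)) <= (1-t) * / sqrt (s2 * Q s2 y)).
  { apply Rmult_le_compat_l; lra. }
  lra.
Qed.

Lemma H_conv s1 s2 t : 0 < s1 < 1 -> 0 < s2 < 1 -> s1 <> s2 -> 0 < t < 1 ->
  H (t * s1 + (1 - t) * s2) < t * H s1 + (1 - t) * H s2.
Proof.
  intros H1 H2 Hne Ht.
  assert (Hm : 0 < t * s1 + (1 - t) * s2 < 1) by (split; nra).
  assert (HI : is_RInt (fun y => t * psi s1 y + (1 - t) * psi s2 y) 0 1
                 (t * H s1 + (1 - t) * H s2)).
  { apply (is_RInt_plus (V := R_NormedModule) (fun y => t * psi s1 y) (fun y => (1-t) * psi s2 y));
    apply (is_RInt_scal (V := R_NormedModule)); apply (RInt_correct (V := R_CompleteNormedModule));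
    apply psi_ex; auto. }
  rewrite <- (is_RInt_unique _ _ _ _ HI).
  unfold H at 1. apply RInt_lt.
  - lra.
  - intros y _. apply (@ex_derive_continuous R_AbsRing R_NormedModule).
    apply (ex_derive_plus (K := R_AbsRing) (V := R_NormedModule) (fun y => t * psi s1 y) (fun y => (1-t) * psi s2 y));
    apply ex_derive_scal; apply psi_derive; auto.
  - intros y _. apply psi_cont; auto.
  - intros y Hy. apply psi_conv; auto.
Qed.

Lemma H_conv_le s1 s2 t : 0 < s1 < 1 -> 0 < s2 < 1 -> 0 <= t <= 1 ->
  H (t * s1 + (1 - t) * s2) <= t * H s1 + (1 - t) * H s2.
Proof.
  intros H1 H2 Ht.
  destruct (Req_dec s1 s2) as [->|Hne].
  - replace (t * s2 + (1 - t) * s2) with s2 by ring. lra.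
  - destruct (Req_dec t 0) as [->|Ht0].
    + replace (0 * s1 + (1 - 0) * s2) with s2 by ring. lra.
    + destruct (Req_dec t 1) as [->|Ht1].
      * replace (1 * s1 + (1 - 1) * s2) with s1 by ring. lra.
      * left. apply H_conv; auto. lra.
Qed.

Section Conv.
Variable f : R -> R.
Hypothesis Hc : forall x y t, 0 < x < 1 -> 0 < y < 1 -> 0 <= t <= 1 ->
  f (t * x + (1 - t) * y) <= t * f x + (1 - t) * f y.

Lemma three p z q : 0 < p -> p <= z -> z <= q -> q < 1 -> p < q ->
  f z * (q - p) <= (q - z) * f p + (z - p) * f q.
Proof.
  intros. set (t := (q - z) / (q - p)).
  assert (Et : t * p + (1 - t) * q = z) by (unfold t; field; lra).
  assert (Ht : 0 <= t <= 1).
  { unfold t. split. apply Rmult_le_pos; [lra| apply Rlt_le, Rinv_0_lt_compat; lra].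
    apply Rmult_le_reg_r with (q - p); [lra|]. field_simplify; lra. }
  pose proof (Hc p q t ltac:(lra) ltac:(lra) Ht) as HH. rewrite Et in HH.
  assert (E1 : t * (q - p) = q - z) by (unfold t; field; lra).
  assert (E2 : (1 - t) * (q - p) = z - p) by (unfold t; field; lra).
  apply Rmult_le_compat_r with (r := q - p) in HH; [|lra].
  rewrite Rmult_plus_distr_r in HH.
  replace (t * f p * (q - p)) with ((t * (q - p)) * f p) in HH by ring.
  replace ((1 - t) * f q * (q - p)) with (((1 - t) * (q - p)) * f q) in HH by ring.
  rewrite E1, E2 in HH. lra.
Qed.

Lemma conv_cont x : 0 < x < 1 -> continuity_pt f x.
Proof.
  intros Hx. apply continuity_pt_locally. intros eps.
  set (a := x / 2). set (b := (1 + x) / 2).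
  assert (Ha : 0 < a < x) by (unfold a; lra).
  assert (Hb : x < b < 1) by (unfold b; lra).
  set (L := Rabs (f a - f x) / (x - a) + Rabs (f b - f x) / (b - x) + 1).
  assert (HA : 0 <= Rabs (f a - f x) / (x - a)).
  { apply Rmult_le_pos; [apply Rabs_pos| apply Rlt_le, Rinv_0_lt_compat; lra]. }
  assert (HB : 0 <= Rabs (f b - f x) / (b - x)).
  { apply Rmult_le_pos; [apply Rabs_pos| apply Rlt_le, Rinv_0_lt_compat; lra]. }
  assert (HL : 0 < L) by (unfold L; lra).
  assert (Lip : forall y, a <= y <= b -> Rabs (f y - f x) <= L * Rabs (y - x)).
  { intros y Hy.
    assert (EA : Rabs (f a - f x) = (Rabs (f a - f x) / (x - a)) * (x - a)) by (field; lra).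
    assert (EB : Rabs (f b - f x) = (Rabs (f b - f x) / (b - x)) * (b - x)) by (field; lra).
    set (A := Rabs (f a - f x) / (x - a)) in *. set (B := Rabs (f b - f x) / (b - x)) in *.
    pose proof (Rle_abs (f a - f x)). pose proof (Rle_abs (f b - f x)).
    destruct (Rtotal_order y x) as [Hyx|[Hyx|Hyx]].
    -
      pose proof (three a y x ltac:(lra) ltac:(lra) ltac:(lra) ltac:(lra) ltac:(lra)) as U.
      pose proof (three y x b ltac:(lra) ltac:(lra) ltac:(lra) ltac:(lra) ltac:(lra)) as Lo.
      assert (U' : (f y - f x) * (x - a) <= (x - y) * (A * (x - a))) by nra.
      assert (U'' : f y - f x <= (x - y) * A).
      { apply Rmult_le_reg_r with (x - a); [lra|]. nra. }
      assert (Lo' : (f x - f y) * (b - x) <= (x - y) * (B * (b - x))) by nra.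
      assert (Lo'' : f x - f y <= (x - y) * B).
      { apply Rmult_le_reg_r with (b - x); [lra|]. nra. }
      rewrite (Rabs_left1 (y - x)) by lra.
      assert (0 <= (x - y) * A) by (apply Rmult_le_pos; lra).
      assert (0 <= (x - y) * B) by (apply Rmult_le_pos; lra).
      unfold L. fold A B. apply Rabs_le. split; ring_simplify; lra.
    - subst. rewrite !Rminus_diag, !Rabs_R0. lra.
    - pose proof (three x y b ltac:(lra) ltac:(lra) ltac:(lra) ltac:(lra) ltac:(lra)) as U.
      pose proof (three a x y ltac:(lra) ltac:(lra) ltac:(lra) ltac:(lra) ltac:(lra)) as Lo.
      assert (U' : (f y - f x) * (b - x) <= (y - x) * (B * (b - x))) by nra.
      assert (U'' : f y - f x <= (y - x) * B).
      { apply Rmult_le_reg_r with (b - x); [lra|]. nra. }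
      assert (Lo' : (f x - f y) * (x - a) <= (y - x) * (A * (x - a))) by nra.
      assert (Lo'' : f x - f y <= (y - x) * A).
      { apply Rmult_le_reg_r with (x - a); [lra|]. nra. }
      rewrite (Rabs_right (y - x)) by lra.
      assert (0 <= (y - x) * A) by (apply Rmult_le_pos; lra).
      assert (0 <= (y - x) * B) by (apply Rmult_le_pos; lra).
      unfold L. fold A B. apply Rabs_le. split; ring_simplify; lra. }
  assert (Hd : 0 < Rmin (Rmin (x - a) (b - x)) (eps / L)).
  { apply Rmin_pos; [apply Rmin_pos; lra|]. apply Rdiv_lt_0_compat; auto. apply cond_pos. }
  exists (mkposreal _ Hd). intros y Hy.
  change (Rabs (y - x) < Rmin (Rmin (x - a) (b - x)) (eps / L)) in Hy.
  pose proof (Rmin_l (Rmin (x - a) (b - x)) (eps / L)).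
  pose proof (Rmin_r (Rmin (x - a) (b - x)) (eps / L)).
  pose proof (Rmin_l (x - a) (b - x)). pose proof (Rmin_r (x - a) (b - x)).
  apply Rabs_lt_between' in Hy.
  assert (Hy2 : Rabs (y - x) < eps / L) by (apply Rabs_def1; lra).
  eapply Rle_lt_trans. apply Lip. lra.
  apply Rmult_lt_reg_l with (/ L). apply Rinv_0_lt_compat; auto.
  rewrite <- Rmult_assoc, Rinv_l by lra. rewrite Rmult_1_l.
  unfold Rdiv in Hy2. rewrite Rmult_comm in Hy2. auto.
Qed.
End Conv.

Lemma H_lower0 s : 0 < s < 1 -> / sqrt s <= H s.
Proof.
  intros Hs.
  assert (E : RInt (fun _ => / sqrt s) 0 1 = / sqrt s).
  { rewrite RInt_const. rewrite Rminus_0_r. apply (scal_one (V := R_ModuleSpace)). }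
  rewrite <- E. unfold H. apply RInt_le.
  - lra.
  - apply ex_RInt_const.
  - apply psi_ex; auto.
  - intros y Hy. unfold psi.
    pose proof (sQ_pos s y Hs).
    apply Rinv_le_contravar. apply sqrt_lt_R0; auto.
    apply sqrt_le_1; try lra.
    assert (Q s y <= 1).
    { unfold Q, Rw. set (w := 1 - y^2).
      assert (0 < w < 1) by (unfold w; nra).
      assert (0 <= s * (1 + w) * (1 + w^2) / 4).
      { repeat apply Rmult_le_pos; nra. }
      nra. }
    nra.
Qed.

Lemma H_lower1 s : 0 < s < 1 -> - ln (sqrt (1 - s)) <= H s.
Proof.
  intros Hs. set (e := sqrt (1 - s)).
  assert (He : 0 < e) by (apply sqrt_lt_R0; lra).
  assert (Ee : e * e = 1 - s) by (apply sqrt_sqrt; lra).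
  assert (HI : is_RInt (fun y => / (y + e)) 0 1 (ln (1 + e) - ln (0 + e))).
  { apply (is_RInt_derive (V := R_CompleteNormedModule) (fun y => ln (y + e))).
    - intros y Hy. rewrite Rmin_left, Rmax_right in Hy by lra.
      auto_derive. lra. field. lra.
    - intros y Hy. rewrite Rmin_left, Rmax_right in Hy by lra.
      apply (@ex_derive_continuous R_AbsRing R_NormedModule).
      auto_derive. lra. }
  assert (Hln : ln (1 + e) >= 0).
  { rewrite <- ln_1. apply Rle_ge. destruct (Req_dec e 0); [lra|].
    left. apply ln_increasing; lra. }
  replace (0 + e) with e in HI by ring.
  apply Rle_trans with (ln (1 + e) - ln e); [lra|].
  rewrite <- (is_RInt_unique _ _ _ _ HI). unfold H. apply RInt_le.
  - lra.
  - eexists; eauto.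
  - apply psi_ex; auto.
  - intros y Hy. unfold psi.
    pose proof (sQ_pos s y Hs).
    apply Rinv_le_contravar. apply sqrt_lt_R0; auto.
    assert (Q s y <= y^2 / 2 + (1 - s)).
    { unfold Q, Rw. set (w := 1 - y^2).
      assert (0 < w < 1) by (unfold w; nra).
      assert (E : (1 + w + w^2)/3 - s*(1+w)*(1+w^2)/4 =
         (1 - w) * (3*w^2 + 2*w + 1)/12 + (1 - s) * ((1 + w) * (1 + w^2)) / 4)
        by field.
      rewrite E.
      assert ((1 - w) * (3*w^2 + 2*w + 1)/12 <= (1 - w) / 2).
      { assert (0 < 1 - w) by lra. assert (3*w^2 + 2*w + 1 <= 6) by nra. nra. }
      assert ((1 - s) * ((1 + w) * (1 + w^2)) / 4 <= 1 - s).
      { assert ((1 + w) * (1 + w^2) <= 4) by nra. nra. }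
      unfold w in *. lra. }
    assert (s * Q s y <= (y + e) * (y + e)).
    { pose proof (Q_pos s y ltac:(lra)). nra. }
    rewrite <- (sqrt_square (y + e)) by lra.
    apply sqrt_le_1; nra.
Qed.

Lemma H_big0 M x0 : 0 < x0 < 1 -> exists a, 0 < a < x0 /\ M < H a.
Proof.
  intros Hx.
  set (a := Rmin (x0 / 2) (/ (M * M + 1))).
  assert (HMp : 0 < M * M + 1) by nra.
  assert (Ha0 : 0 < a) by (apply Rmin_pos; [lra| apply Rinv_0_lt_compat; lra]).
  assert (Ha1 : a <= x0 / 2) by apply Rmin_l.
  assert (Ha2 : a <= / (M * M + 1)) by apply Rmin_r.
  exists a. split; [lra|].
  apply Rlt_le_trans with (/ sqrt a); [|apply H_lower0; lra].
  pose proof (sqrt_lt_R0 _ Ha0) as Hr. pose proof (sqrt_sqrt _ (Rlt_le _ _ Ha0)) as Er.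
  set (r := sqrt a) in *.
  assert (Har : a * (M * M + 1) <= 1).
  { apply Rmult_le_compat_r with (r := M * M + 1) in Ha2; [|lra].
    rewrite Rinv_l in Ha2; lra. }
  destruct (Rle_or_lt M 0) as [HM|HM].
  - pose proof (Rinv_0_lt_compat _ Hr). lra.
  - apply Rmult_lt_reg_r with r; auto. rewrite Rinv_l by lra.
    apply Rnot_le_lt. intro h.
    assert (1 <= M * r * (M * r)) by nra. nra.
Qed.

Lemma H_big1 M x0 : 0 < x0 < 1 -> exists b, x0 < b < 1 /\ M < H b.
Proof.
  intros Hx.
  set (E := exp (- M)). assert (HE : 0 < E) by apply exp_pos.
  set (b := Rmax ((1 + x0) / 2) (1 - E * E / 2)).
  assert (Hb1 : (1 + x0) / 2 <= b) by apply Rmax_l.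
  assert (Hb2 : 1 - E * E / 2 <= b) by apply Rmax_r.
  assert (Hb3 : b < 1).
  { unfold b. apply Rmax_lub_lt; nra. }
  exists b. split; [lra|].
  apply Rlt_le_trans with (- ln (sqrt (1 - b))); [|apply H_lower1; lra].
  assert (sqrt (1 - b) < E).
  { rewrite <- (sqrt_square E) by lra. apply sqrt_lt_1; nra. }
  assert (ln (sqrt (1 - b)) < ln E).
  { apply ln_increasing; auto. apply sqrt_lt_R0; lra. }
  unfold E in *. rewrite ln_exp in *. lra.
Qed.

Lemma H_cont x : 0 < x < 1 -> continuity_pt H x.
Proof. apply conv_cont. intros. apply H_conv_le; auto. Qed.

Lemma H_three p z q : 0 < p -> p <= z -> z <= q -> q < 1 -> p < q ->
  H z * (q - p) <= (q - z) * H p + (z - p) * H q.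
Proof. apply three. intros. apply H_conv_le; auto. Qed.

Lemma H_min : exists ss, 0 < ss < 1 /\ forall s, 0 < s < 1 -> H ss <= H s.
Proof.
  destruct (H_big0 (H (1/2)) (1/2) ltac:(lra)) as [a [Ha HHa]].
  destruct (H_big1 (H (1/2)) (1/2) ltac:(lra)) as [b [Hb HHb]].
  destruct (continuity_ab_min H a b ltac:(lra)) as [ss [Hmin Hss]].
  { intros. apply H_cont. lra. }
  exists ss. split; [lra|]. intros s Hs.
  pose proof (Hmin (1/2) ltac:(lra)) as Hh.
  destruct (Rlt_or_le s a) as [Hsa|Hsa].
  - pose proof (H_three s a (1/2) ltac:(lra) ltac:(lra) ltac:(lra) ltac:(lra) ltac:(lra)) as T.
    apply Rnot_lt_le. intro h.
    assert ((1/2 - a) * (H s - H (1/2)) <= 0).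
    { apply Rmult_le_0_l; lra. }
    nra.
  - destruct (Rle_or_lt s b) as [Hsb|Hsb].
    + apply Hmin. lra.
    + pose proof (H_three (1/2) b s ltac:(lra) ltac:(lra) ltac:(lra) ltac:(lra) ltac:(lra)) as T.
      apply Rnot_lt_le. intro h.
      assert ((b - 1/2) * (H s - H (1/2)) <= 0).
      { apply Rmult_le_0_l; lra. }
      nra.
Qed.

Section Main.
Variable ss : R.
Hypothesis Hss : 0 < ss < 1.
Hypothesis Hmin : forall s, 0 < s < 1 -> H ss <= H s.

Lemma H_dec x y : 0 < x -> x < y -> y <= ss -> H y < H x.
Proof.
  intros Hx Hxy Hy.
  destruct (Req_dec y ss) as [->|Hne].
  - apply Rnot_le_lt. intro h.
    pose proof (H_conv x ss (1/2) ltac:(lra) Hss ltac:(lra) ltac:(lra)) as C.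
    pose proof (Hmin (1/2 * x + (1 - 1/2) * ss) ltac:(lra)) as Hmz. lra.
  - set (t := (ss - y) / (ss - x)).
    assert (Ht : 0 < t < 1).
    { unfold t. split. apply Rdiv_lt_0_compat; lra.
      apply Rmult_lt_reg_r with (ss - x); [lra|]. field_simplify; lra. }
    assert (Ey : t * x + (1 - t) * ss = y) by (unfold t; field; lra).
    pose proof (H_conv x ss t ltac:(lra) Hss ltac:(lra) Ht) as C.
    rewrite Ey in C. pose proof (Hmin x ltac:(lra)) as Hmx.
    assert ((1 - t) * H ss <= (1 - t) * H x) by (apply Rmult_le_compat_l; lra).
    lra.
Qed.

Lemma H_inc x y : ss <= x -> x < y -> y < 1 -> H x < H y.
Proof.
  intros Hx Hxy Hy.
  destruct (Req_dec x ss) as [->|Hne].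
  - apply Rnot_le_lt. intro h.
    pose proof (H_conv y ss (1/2) ltac:(lra) Hss ltac:(lra) ltac:(lra)) as C.
    pose proof (Hmin (1/2 * y + (1 - 1/2) * ss) ltac:(lra)) as Hmz. lra.
  - set (t := (x - ss) / (y - ss)).
    assert (Ht : 0 < t < 1).
    { unfold t. split. apply Rdiv_lt_0_compat; lra.
      apply Rmult_lt_reg_r with (y - ss); [lra|]. field_simplify; lra. }
    assert (Ey : t * y + (1 - t) * ss = x) by (unfold t; field; lra).
    pose proof (H_conv y ss t ltac:(lra) Hss ltac:(lra) Ht) as C.
    rewrite Ey in C. pose proof (Hmin y ltac:(lra)) as Hmx.
    assert ((1 - t) * H ss <= (1 - t) * H y) by (apply Rmult_le_compat_l; lra).
    lra.
Qed.

Lemma H_strict s : 0 < s < 1 -> s <> ss -> H ss < H s.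
Proof.
  intros Hs Hne. destruct (Rtotal_order s ss) as [h|[h|h]].
  - apply H_dec; lra.
  - contradiction.
  - apply H_inc; lra.
Qed.
End Main.

Lemma cc_div sigma lam hs : 0 < lam ->
  (sigma < cc lam * hs <-> sigma / cc lam < hs).
Proof.
  intros Hl. pose proof (cc_pos lam Hl). split; intro h.
  - apply Rmult_lt_reg_l with (cc lam); auto. field_simplify; lra.
  - apply Rmult_lt_reg_l with (/ cc lam). apply Rinv_0_lt_compat; auto.
    rewrite <- Rmult_assoc, Rinv_l, Rmult_1_l by lra.
    rewrite Rmult_comm. exact h.
Qed.

Lemma cc_lt l1 l2 : 0 < l1 < l2 -> cc l2 < cc l1.
Proof.
  intros H. unfold cc. apply sqrt_lt_1.
  - apply Rlt_le, Rdiv_lt_0_compat; lra.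
  - apply Rlt_le, Rdiv_lt_0_compat; lra.
  - unfold Rdiv. apply Rmult_lt_compat_l; [lra|]. apply Rinv_lt_contravar; nra.
Qed.

Lemma ell_lt sigma l1 l2 : 0 < sigma -> 0 < l1 < l2 -> sigma / cc l1 < sigma / cc l2.
Proof.
  intros Hs H. pose proof (cc_lt _ _ H). pose proof (cc_pos l2 ltac:(lra)).
  unfold Rdiv. apply Rmult_lt_compat_l; auto. apply Rinv_lt_contravar; nra.
Qed.

Theorem proposition2p3 (sigma : R) (Hs : 0 < sigma < 1 / 2) :
  exists lamstar sstar : R,
    0 < lamstar /\ 0 < sstar < 1 /\
    (forall lam, 0 < lam < lamstar ->
       forall s, I1 sigma lam s <-> 0 < s < 1) /\
    (forall s, I1 sigma lamstar s <-> (0 < s < 1 /\ s <> sstar)) /\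
    (forall lam, lamstar < lam ->
       exists s0 s1, 0 < s0 /\ s0 < sstar /\ sstar < s1 /\ s1 < 1 /\
         forall s, I1 sigma lam s <-> (0 < s < s0 \/ s1 < s < 1)).
Proof.
  destruct H_min as [ss [Hss Hmin]].
  set (m := H ss).
  assert (Hm : 0 < m).
  { unfold m. eapply Rlt_le_trans; [|apply H_lower0; auto].
    apply Rinv_0_lt_compat, sqrt_lt_R0; lra. }
  set (Ls := 2 * m ^ 2 / sigma ^ 2).
  assert (HLs : 0 < Ls).
  { unfold Ls. apply Rdiv_lt_0_compat; [|apply pow_lt; lra]. nra. }
  assert (Eell : sigma / cc Ls = m).
  { unfold cc. replace (2 / Ls) with ((sigma / m) ^ 2) by (unfold Ls; field; lra).
    rewrite sqrt_pow2 by (apply Rlt_le, Rdiv_lt_0_compat; lra). field. lra. }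
  exists Ls, ss. split; [auto|]. split; [auto|]. split; [|split].
  - intros lam Hl s. rewrite I1_char by lra. rewrite cc_div by lra.
    pose proof (ell_lt sigma lam Ls ltac:(lra) Hl). split; [tauto|].
    intros Hs'. split; auto. pose proof (Hmin s Hs') as Hq. fold m in Hq. lra.
  - intros s. rewrite I1_char by lra. rewrite cc_div by lra. rewrite Eell.
    split.
    + intros [Hs' Hlt]. split; auto. intro; subst. unfold m in Hlt. lra.
    + intros [Hs' Hne]. split; auto. apply H_strict; auto.
  - intros lam Hl.
    set (c := sigma / cc lam).
    assert (Hc : m < c) by (rewrite <- Eell; apply ell_lt; lra).
    destruct (H_big0 c ss Hss) as [a [Ha HHa]].
    destruct (H_big1 c ss Hss) as [b [Hb HHb]].
    destruct (IVT_interv (fun x => c - H x) a ss) as [s0 [Hs0 E0]].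
    { intros x Hx. apply continuity_pt_minus. apply continuity_pt_const. intros ? ?; auto.
      apply H_cont. lra. }
    { lra. } { lra. } { fold m. lra. }
    destruct (IVT_interv (fun x => H x - c) ss b) as [s1 [Hs1 E1]].
    { intros x Hx. apply continuity_pt_minus. apply H_cont. lra.
      apply continuity_pt_const. intros ? ?; auto. }
    { lra. } { fold m. lra. } { lra. }
    assert (Hs0a : s0 <> a) by (intro e; rewrite e in E0; lra).
    assert (Hs0s : s0 <> ss) by (intro e; rewrite e in E0; fold m in E0; lra).
    assert (Hs1b : s1 <> b) by (intro e; rewrite e in E1; lra).
    assert (Hs1s : s1 <> ss) by (intro e; rewrite e in E1; fold m in E1; lra).
    exists s0, s1. split; [lra|]. split; [lra|]. split; [lra|]. split; [lra|].
    intros s. rewrite I1_char by lra. rewrite cc_div by lra. fold c.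
    split.
    + intros [Hs' Hlt].
      destruct (Rlt_or_le s s0) as [h0|h0]; [left; lra|].
      destruct (Rlt_or_le s1 s) as [h1|h1]; [right; lra|].
      exfalso.
      destruct (Rle_or_lt s ss) as [h2|h2].
      * destruct (Req_dec s s0) as [->|hne]; [lra|].
        pose proof (H_dec ss Hss Hmin s0 s ltac:(lra) ltac:(lra) h2). lra.
      * destruct (Req_dec s s1) as [->|hne]; [lra|].
        pose proof (H_inc ss Hss Hmin s s1 ltac:(lra) ltac:(lra) ltac:(lra)). lra.
    + intros [h|h].
      * split; [lra|]. pose proof (H_dec ss Hss Hmin s s0 ltac:(lra) ltac:(lra) ltac:(lra)). lra.
      * split; [lra|]. pose proof (H_inc ss Hss Hmin s1 s ltac:(lra) ltac:(lra) ltac:(lra)). lra.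
Qed.
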